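(* Let $U\le B$ be positive integers, $P>0$, $\mathbf{H}\in\mathbb{C}^{U\times B}$, and $\mathbf{s}\in\mathbb{C}^U$ with $\mathbf{s}\neq\mathbf{0}$. Set $$\mathbf{Q}=\mathbf{I}_U-\frac{\mathbf{s}\mathbf{s}^H}{\|\mathbf{s}\|_2^2},\qquad \mathbf{A}=\mathbf{Q}\mathbf{H}\in\mathbb{C}^{U\times B},$$ let $\ell=\sqrt{P/(2B)}$ and $$\mathcal{B}^B=\{\mathbf{c}\in\mathbb{C}^B:\ |\mathrm{Re}\{c_b\}|\le \ell,\ |\mathrm{Im}\{c_b\}|\le \ell,\ b=1,\dots,B\}.$$ Let $\delta>0$ and a step size $\tau>0$ satisfy $\tau<\|\mathbf{A}^H\mathbf{A}\|_{2,2}^{-1}$ and $\tau\delta<1$. Consider the objective $$F(\mathbf{x})=\tfrac12\|\mathbf{A}\mathbf{x}\|_2^2-\tfrac{\delta}{2}\|\mathbf{x}\|_2^2+\chi(\mathbf{x}\in\mathcal{B}^B),$$ i.e. the problem $\min_{\mathbf{x}\in\mathcal{B}^B}\tfrac12\|\mathbf{A}\mathbf{x}\|_2^2-\tfrac{\delta}{2}\|\mathbf{x}\|_2^2$. Define the sequence (algorithm C2PO) by $\mathbf{x}^{(1)}=\mathbf{H}^H\mathbf{s}$ and, for $t=1,2,\dots$, $$\mathbf{z}^{(t+1)}=\mathbf{x}^{(t)}-\tau\mathbf{A}^H\mathbf{A}\mathbf{x}^{(t)},\qquad \mathbf{x}^{(t+1)}=\mathrm{prox}_g(\mathbf{z}^{(t+1)};\tau),$$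 where $\mathrm{prox}_g$ acts entrywise as $$\mathrm{prox}_g(z)=\mathrm{sgn}(\mathrm{Re}\{z\})\min\Big\{\tfrac{1}{1-\tau\delta}|\mathrm{Re}\{z\}|,\ \ell\Big\}+j\,\mathrm{sgn}(\mathrm{Im}\{z\})\min\Big\{\tfrac{1}{1-\tau\delta}|\mathrm{Im}\{z\}|,\ \ell\Big\}.$$ Then C2PO decreases the objective monotonically, i.e. $F(\mathbf{x}^{(t+1)})\le F(\mathbf{x}^{(t)})$ for all $t$, and any limit point of the iterates $\{\mathbf{x}^{(t)}\}$ is a stationary point of this problem.
   Context: $\chi(\mathbf{x}\in\mathcal{B}^B)$ equals $0$ if $\mathbf{x}\in\mathcal{B}^B$ and $+\infty$ otherwise. $\|\cdot\|_{2,2}$ is the spectral (matrix $\ell_2$) norm. $\mathrm{sgn}(a)=+1$ for $a\ge0$ and $-1$ for $a<0$; $j$ is the imaginary unit. Complex vectors are identified with real vectors of twice the dimension, with real inner product $\mathrm{Re}\{\mathbf{u}^H\mathbf{v}\}$. Writing $f(\mathbf{x})=\tfrac12\|\mathbf{A}\mathbf{x}\|_2^2$ and $g(\mathbf{x})=\chi(\mathbf{x}\in\mathcal{B}^B)-\tfrac{\delta}{2}\|\mathbf{x}\|_2^2$, a stationary point is a point $\mathbf{x}^\star\in\mathcal{B}^B$ with $0\in\partial g(\mathbf{x}^\star)+\nabla f(\mathbf{x}^\star)$, equivalently $-(\mathbf{A}^H\mathbf{A}\mathbf{x}^\star-\delta\mathbf{x}^\star)$ lies in the normal cone of $\mathcal{B}^B$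 at $\mathbf{x}^\star$. *)

(* Defs.v *)
From HB Require Import structures.
From mathcomp Require Import all_boot all_order all_algebra.
From mathcomp Require Import complex.
From mathcomp Require Import boolp classical_sets reals constructive_ereal.
Set Implicit Arguments. Unset Strict Implicit. Unset Printing Implicit Defensive.
Import Order.TTheory GRing.Theory Num.Theory.
Local Open Scope ring_scope.
Local Open Scope complex_scope.
Local Open Scope classical_set_scope.

Section C2PO.
Variable R : realType.
Local Notation C := (R[i]).

Definition adjmx m n (M : 'M[C]_(m, n)) : 'M[C]_(n, m) :=
  \matrix_(i, j) conjc (M j i).

Definition cnorm2 n (v : 'cV[C]_n) : R :=
  \sum_(i < n) ((complex.Re (v i 0)) ^+ 2 + (complex.Im (v i 0)) ^+ 2).

(* real inner product Re{u^H v} *)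
Definition rdot n (u v : 'cV[C]_n) : R :=
  \sum_(i < n) (complex.Re (u i 0) * complex.Re (v i 0) + complex.Im (u i 0) * complex.Im (v i 0)).

Definition specnorm m n (M : 'M[C]_(m, n)) : R :=
  sup [set r : R | exists v : 'cV[C]_n,
                     cnorm2 v <= 1 /\ r = Num.sqrt (cnorm2 (M *m v))].

Definition inbox n (l : R) (x : 'cV[C]_n) : Prop :=
  forall i : 'I_n, `|complex.Re (x i 0)| <= l /\ `|complex.Im (x i 0)| <= l.

Definition sgn (a : R) : R := if 0 <= a then 1 else -1.

Definition prox_entry (tau delta l : R) (z : C) : C :=
  Complex (sgn (complex.Re z) * Num.min ((1 - tau * delta)^-1 * `|complex.Re z|) l)
          (sgn (complex.Im z) * Num.min ((1 - tau * delta)^-1 * `|complex.Im z|) l).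

Definition prox n (tau delta l : R) (z : 'cV[C]_n) : 'cV[C]_n :=
  \col_i prox_entry tau delta l (z i 0).

Definition objF m n (A : 'M[C]_(m, n)) (delta l : R) (x : 'cV[C]_n) : \bar R :=
  if asbool (inbox l x)
  then ((cnorm2 (A *m x)) / 2 - delta / 2 * cnorm2 x)%:E
  else (+oo)%E.

Definition normal_cone n (l : R) (x v : 'cV[C]_n) : Prop :=
  forall y : 'cV[C]_n, inbox l y -> rdot v (y - x) <= 0.

Definition stationary m n (A : 'M[C]_(m, n)) (delta l : R) (x : 'cV[C]_n) : Prop :=
  inbox l x /\
  normal_cone l x (- (adjmx A *m A *m x - delta%:C *: x)).

Definition limit_point n (x : nat -> 'cV[C]_n) (p : 'cV[C]_n) : Prop :=
  forall eps : R, 0 < eps -> forall N : nat,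
    exists t : nat, (N <= t)%N /\ cnorm2 (x t - p) < eps.

End C2PO.

(* Main.v *)
Require Import Defs.
From HB Require Import structures.
From mathcomp Require Import all_boot all_order all_algebra.
From mathcomp Require Import complex.
From mathcomp Require Import boolp classical_sets reals constructive_ereal.
From mathcomp Require Import ring lra.
Import Order.TTheory GRing.Theory Num.Theory.
Set Implicit Arguments. Unset Strict Implicit.
Local Open Scope ring_scope.
Local Open Scope complex_scope.

Section H.
Variable R : realType.
Local Notation C := (R[i]).

Lemma ReD (z w : C) : complex.Re (z + w) = complex.Re z + complex.Re w.
Proof. by case: z; case: w. Qed.
Lemma ImD (z w : C) : complex.Im (z + w) = complex.Im z + complex.Im w.
Proof. by case: z; case: w. Qed.
Lemma ReN (z : C) : complex.Re (- z) = - complex.Re z.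
Proof. by case: z. Qed.
Lemma ImN (z : C) : complex.Im (- z) = - complex.Im z.
Proof. by case: z. Qed.
Lemma ReM (z w : C) : complex.Re (z * w) = complex.Re z * complex.Re w - complex.Im z * complex.Im w.
Proof. by case: z; case: w. Qed.
Lemma ImM (z w : C) : complex.Im (z * w) = complex.Re z * complex.Im w + complex.Im z * complex.Re w.
Proof. by case: z => a b; case: w => c d /=. Qed.
Lemma ReC (c : R) : complex.Re (c%:C) = c. Proof. by []. Qed.
Lemma ImC (c : R) : complex.Im (c%:C) = 0. Proof. by []. Qed.
Lemma Re0 : complex.Re (0 : C) = 0. Proof. by []. Qed.
Lemma Im0 : complex.Im (0 : C) = 0. Proof. by []. Qed.
Lemma Re_sum n (F : 'I_n -> C) : complex.Re (\sum_(i < n) F i) = \sum_(i < n) complex.Re (F i).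
Proof. exact: (big_morph _ ReD Re0). Qed.
Lemma Im_sum n (F : 'I_n -> C) : complex.Im (\sum_(i < n) F i) = \sum_(i < n) complex.Im (F i).
Proof. exact: (big_morph _ ImD Im0). Qed.
Lemma ReJ (z : C) : complex.Re (z^*) = complex.Re z. Proof. by case: z. Qed.
Lemma ImJ (z : C) : complex.Im (z^*) = - complex.Im z. Proof. by case: z. Qed.

Definition reE := (ReD, ImD, ReN, ImN, ReM, ImM, ReC, ImC, ReJ, ImJ, Re0, Im0).

Lemma rdotC n (u v : 'cV[C]_n) : rdot u v = rdot v u.
Proof. rewrite /rdot; apply: eq_bigr => i _; ring. Qed.
Lemma rdotDl n (u v w : 'cV[C]_n) : rdot (u + v) w = rdot u w + rdot v w.
Proof. rewrite /rdot -big_split; apply: eq_bigr => i _ /=; rewrite !mxE !reE; ring. Qed.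
Lemma rdotNl n (u w : 'cV[C]_n) : rdot (- u) w = - rdot u w.
Proof. rewrite /rdot -sumrN; apply: eq_bigr => i _ /=; rewrite !mxE !reE; ring. Qed.
Lemma rdotZl n (c : R) (u w : 'cV[C]_n) : rdot (c%:C *: u) w = c * rdot u w.
Proof. rewrite /rdot mulr_sumr; apply: eq_bigr => i _ /=; rewrite !mxE !reE; ring. Qed.
Lemma rdotDr n (u v w : 'cV[C]_n) : rdot w (u + v) = rdot w u + rdot w v.
Proof. by rewrite rdotC rdotDl !(rdotC w). Qed.
Lemma rdotNr n (u w : 'cV[C]_n) : rdot w (- u) = - rdot w u.
Proof. by rewrite rdotC rdotNl rdotC. Qed.
Lemma rdotZr n (c : R) (u w : 'cV[C]_n) : rdot w (c%:C *: u) = c * rdot w u.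
Proof. by rewrite rdotC rdotZl rdotC. Qed.
Lemma rdotBl n (u v w : 'cV[C]_n) : rdot (u - v) w = rdot u w - rdot v w.
Proof. by rewrite rdotDl rdotNl. Qed.
Lemma rdotBr n (u v w : 'cV[C]_n) : rdot w (u - v) = rdot w u - rdot w v.
Proof. by rewrite rdotDr rdotNr. Qed.
Lemma rdotvv n (v : 'cV[C]_n) : rdot v v = cnorm2 v.
Proof. by apply: eq_bigr => i _; rewrite !expr2. Qed.
Lemma cnorm2_ge0 n (v : 'cV[C]_n) : 0 <= cnorm2 v.
Proof. by apply: sumr_ge0 => i _; rewrite addr_ge0 // sqr_ge0. Qed.

Lemma adjointP m n (A : 'M[C]_(m, n)) u w :
  rdot (A *m u) w = rdot u (adjmx A *m w).
Proof.
rewrite /rdot.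
under eq_bigr => i _ do rewrite !mxE Re_sum Im_sum mulr_suml mulr_suml -big_split /=.
rewrite exchange_big /=; apply: eq_bigr => j _.
rewrite !mxE Re_sum Im_sum !mulr_sumr -big_split /=; apply: eq_bigr => i _.
rewrite !mxE !reE; ring.
Qed.

Definition Nn n (v : 'cV[C]_n) := Num.sqrt (cnorm2 v).

Lemma Nn_ge0 n (v : 'cV[C]_n) : 0 <= Nn v. Proof. exact: sqrtr_ge0. Qed.
Lemma Nn_sqr n (v : 'cV[C]_n) : Nn v ^+ 2 = cnorm2 v.
Proof. by rewrite /Nn sqr_sqrtr // cnorm2_ge0. Qed.

Lemma cnorm2Z n c (v : 'cV[C]_n) : cnorm2 (c%:C *: v) = c ^+ 2 * cnorm2 v.
Proof. by rewrite -!rdotvv rdotZl rdotZr mulrA expr2. Qed.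
Lemma cnorm2N n (v : 'cV[C]_n) : cnorm2 (- v) = cnorm2 v.
Proof. by rewrite -!rdotvv rdotNl rdotNr opprK. Qed.
Lemma cnorm2D n (u v : 'cV[C]_n) : cnorm2 (u + v) = cnorm2 u + 2 * rdot u v + cnorm2 v.
Proof. rewrite -!rdotvv rdotDl !rdotDr (rdotC v u); ring. Qed.

Lemma CS2 n (u v : 'cV[C]_n) : rdot u v ^+ 2 <= cnorm2 u * cnorm2 v.
Proof.
set p := cnorm2 u; set q := cnorm2 v; set r := rdot u v.
have key a : 0 <= a ^+ 2 * p - 2 * a * r + q.
  have := cnorm2_ge0 (a%:C *: u - v).
  rewrite cnorm2D cnorm2N cnorm2Z rdotNr rdotZl -/p -/q -/r.
  move=> h; lra.
have p0 : 0 <= p by exact: cnorm2_ge0.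
have q0 : 0 <= q by exact: cnorm2_ge0.
have [pz|pp] := eqVneq p 0.
  have [rz|rnz] := eqVneq r 0; first by rewrite rz pz; lra.
  have := key ((q + 1) / (2 * r)).
  have -> : 2 * ((q + 1) / (2 * r)) * r = q + 1.
    by field; rewrite rnz.
  rewrite pz mulr0; lra.
have pgt : 0 < p by rewrite lt_neqAle eq_sym pp p0.
have := key (r / p).
have -> : (r / p) ^+ 2 * p = r ^+ 2 / p by field; rewrite pp.
have -> : 2 * (r / p) * r = 2 * (r ^+ 2 / p) by field; rewrite pp.
move=> h.
have h2 : r ^+ 2 / p <= q by lra.
have := ler_wpM2l p0 h2.
by rewrite mulrCA divff ?mulr1 // mulrC.
Qed.

Lemma CS n (u v : 'cV[C]_n) : `|rdot u v| <= Nn u * Nn v.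
Proof.
rewrite /Nn -sqrtrM ?cnorm2_ge0 // -sqrtr_sqr ler_sqrt; last first.
  by rewrite mulr_ge0 ?cnorm2_ge0.
exact: CS2.
Qed.

Lemma rdot_le n (u v : 'cV[C]_n) : rdot u v <= Nn u * Nn v.
Proof. exact: le_trans (ler_norm _) (CS u v). Qed.
Lemma NnN n (v : 'cV[C]_n) : Nn (- v) = Nn v.
Proof. by rewrite /Nn cnorm2N. Qed.
Lemma rdot_ge n (u v : 'cV[C]_n) : - (Nn u * Nn v) <= rdot u v.
Proof. have := rdot_le (- u) v; rewrite rdotNl NnN; lra. Qed.

Lemma le_Nn n (v : 'cV[C]_n) X : 0 <= X -> cnorm2 v <= X ^+ 2 -> Nn v <= X.
Proof.
move=> X0 h; rewrite /Nn -(ger0_norm X0) -sqrtr_sqr ler_sqrt //.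
exact: sqr_ge0.
Qed.

Lemma NnD n (u v : 'cV[C]_n) : Nn (u + v) <= Nn u + Nn v.
Proof.
apply: le_Nn; first by rewrite addr_ge0 ?Nn_ge0.
rewrite cnorm2D -!Nn_sqr; have := rdot_le u v; lra.
Qed.
Lemma NnB n (u v : 'cV[C]_n) : Nn (u - v) <= Nn u + Nn v.
Proof. by rewrite -(NnN v) NnD. Qed.
Lemma NnZ n c (v : 'cV[C]_n) : Nn (c%:C *: v) = `|c| * Nn v.
Proof. by rewrite /Nn cnorm2Z sqrtrM ?sqr_ge0 // sqrtr_sqr. Qed.

Lemma Re_le_Nn n (v : 'cV[C]_n) i : `|complex.Re (v i 0)| <= Nn v.
Proof.
rewrite -sqrtr_sqr /Nn ler_sqrt ?cnorm2_ge0 // /cnorm2 (bigD1 i) //=.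
have := sqr_ge0 (complex.Im (v i 0)).
have : 0 <= \sum_(j < n | j != i) ((complex.Re (v j 0)) ^+ 2 + (complex.Im (v j 0)) ^+ 2).
  by apply: sumr_ge0 => j _; rewrite addr_ge0 ?sqr_ge0.
lra.
Qed.
Lemma Im_le_Nn n (v : 'cV[C]_n) i : `|complex.Im (v i 0)| <= Nn v.
Proof.
rewrite -sqrtr_sqr /Nn ler_sqrt ?cnorm2_ge0 // /cnorm2 (bigD1 i) //=.
have := sqr_ge0 (complex.Re (v i 0)).
have : 0 <= \sum_(j < n | j != i) ((complex.Re (v j 0)) ^+ 2 + (complex.Im (v j 0)) ^+ 2).
  by apply: sumr_ge0 => j _; rewrite addr_ge0 ?sqr_ge0.
lra.
Qed.

Lemma sqrn (a : R) : `|a| ^+ 2 = a ^+ 2.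
Proof. exact: real_normK (num_real a). Qed.

Lemma box_bound n l (v : 'cV[C]_n) : inbox l v -> cnorm2 v <= n%:R * (2 * l ^+ 2).
Proof.
move=> hb.
have -> : n%:R * (2 * l ^+ 2) = \sum_(i < n) (2 * l ^+ 2).
  by rewrite sumr_const card_ord mulr_natl.
apply: ler_sum => i _; have [h1 h2] := hb i.
have s1 : complex.Re (v i 0) ^+ 2 <= l ^+ 2.
  rewrite -sqrn; apply: lerXn2r => //; rewrite ?nnegrE //.
  exact: le_trans (normr_ge0 _) h1.
have s2 : complex.Im (v i 0) ^+ 2 <= l ^+ 2.
  rewrite -sqrn; apply: lerXn2r => //; rewrite ?nnegrE //.
  exact: le_trans (normr_ge0 _) h2.
lra.
Qed.

Section Spec.
Variables (m n : nat) (M : 'M[C]_(m, n)).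
Definition wR (i : 'I_m) : 'cV[C]_n := \col_j Complex (complex.Re (M i j)) (- complex.Im (M i j)).
Definition wI (i : 'I_m) : 'cV[C]_n := \col_j Complex (complex.Im (M i j)) (complex.Re (M i j)).
Definition Kc := \sum_(i < m) (cnorm2 (wR i) + cnorm2 (wI i)).

Lemma ReMv v i : complex.Re ((M *m v) i 0) = rdot (wR i) v.
Proof. rewrite mxE Re_sum; apply: eq_bigr => j _; rewrite !mxE /= ReM; ring. Qed.
Lemma ImMv v i : complex.Im ((M *m v) i 0) = rdot (wI i) v.
Proof. rewrite mxE Im_sum; apply: eq_bigr => j _; rewrite !mxE /= ImM; ring. Qed.

Lemma Kc_ge0 : 0 <= Kc.
Proof. by apply: sumr_ge0 => i _; rewrite addr_ge0 ?cnorm2_ge0. Qed.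

Lemma crude v : cnorm2 (M *m v) <= Kc * cnorm2 v.
Proof.
rewrite /Kc mulr_suml; apply: ler_sum => i _.
rewrite ReMv ImMv mulrDl.
by apply: lerD; apply: CS2.
Qed.

Lemma spec_has_ub : has_ubound [set r : R | exists v : 'cV[C]_n,
                     cnorm2 v <= 1 /\ r = Num.sqrt (cnorm2 (M *m v))].
Proof.
exists (Num.sqrt Kc) => r [v [hv ->]].
rewrite ler_sqrt ?Kc_ge0 //; apply: le_trans (crude v) _.
by rewrite -{2}(mulr1 Kc) ler_wpM2l ?Kc_ge0.
Qed.

Lemma spec_ub v : cnorm2 v <= 1 -> Nn (M *m v) <= specnorm M.
Proof. by move=> hv; apply: (ub_le_sup spec_has_ub); exists v. Qed.

Lemma spec_ge0 : 0 <= specnorm M.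
Proof.
have := spec_ub (v := 0); rewrite mulmx0 /Nn.
have -> : cnorm2 (0 : 'cV[C]_m) = 0 by rewrite /cnorm2 big1 // => i _; rewrite mxE /= expr0n /= addr0.
have -> : cnorm2 (0 : 'cV[C]_n) = 0 by rewrite /cnorm2 big1 // => i _; rewrite mxE /= expr0n /= addr0.
by rewrite sqrtr0; apply.
Qed.

Lemma spec_bound v : Nn (M *m v) <= specnorm M * Nn v.
Proof.
have [nz|nnz] := eqVneq (Nn v) 0.
  rewrite nz mulr0; apply: le_Nn => //; rewrite expr0n /=.
  apply: le_trans (crude v) _; rewrite -Nn_sqr nz expr0n /= mulr0 //.
have np : 0 < Nn v by rewrite lt_neqAle eq_sym nnz Nn_ge0.
have h1 : cnorm2 ((Nn v)^-1%:C *: v) <= 1.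
  rewrite cnorm2Z -Nn_sqr exprVn mulVf //; rewrite expf_eq0 //= (negbTE nnz) //.
have := spec_ub h1.
rewrite -scalemxAr NnZ ger0_norm ?invr_ge0 ?Nn_ge0 //.
move=> h; have := ler_wpM2l (Nn_ge0 v) h.
by rewrite mulrA divff // mul1r mulrC.
Qed.
End Spec.

Lemma prox1 (c z y l : R) : 0 < c -> 0 <= l -> `|y| <= l ->
  0 <= (c * (sgn z * Num.min (c^-1 * `|z|) l) - z) * (y - sgn z * Num.min (c^-1 * `|z|) l).
Proof.
move=> c0 l0; rewrite ler_norml => /andP [hy1 hy2].
have cK a : c * (c^-1 * a) = a by rewrite mulrA divff ?mul1r // gt_eqF.
rewrite /sgn; case: (leP 0 z) => hz /=.
  rewrite (ger0_norm hz) mul1r.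
  have [h|h] := leP (c^-1 * z) l.
    by rewrite cK subrr mul0r.

  have : c * l < c * (c^-1 * z) by rewrite ltr_pM2l.
  rewrite cK => h2; nra.
rewrite (ltr0_norm hz).
have [h|h] := leP (c^-1 * - z) l.
  by rewrite mulN1r mulrN cK opprK subrr mul0r.

have : c * l < c * (c^-1 * - z) by rewrite ltr_pM2l.
rewrite cK => h2; nra.
Qed.

Lemma prox_box n tau delta l (z : 'cV[C]_n) : 0 < 1 - tau * delta -> 0 <= l ->
  inbox l (prox tau delta l z).
Proof.
move=> c0 l0 i; rewrite !mxE /=.
have h a : `|sgn a * Num.min ((1 - tau * delta)^-1 * `|a|) l| <= l.
  have b0 : 0 <= (1 - tau * delta)^-1 * `|a| by rewrite mulr_ge0 // invr_ge0 ltW.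
  have m0 : 0 <= Num.min ((1 - tau * delta)^-1 * `|a|) l by rewrite le_min b0 l0.
  rewrite normrM (ger0_norm m0) /sgn; case: ifP => _; rewrite ?normrN normr1 mul1r ge_min lexx orbT //.
by split; apply: h.
Qed.

Lemma prox_opt n tau delta l (z y : 'cV[C]_n) : 0 < 1 - tau * delta -> 0 <= l ->
  inbox l y ->
  0 <= rdot ((1 - tau * delta)%:C *: prox tau delta l z - z) (y - prox tau delta l z).
Proof.
move=> c0 l0 hy; rewrite /rdot; apply: sumr_ge0 => i _.
rewrite !mxE !reE /=.
have [hy1 hy2] := hy i.
have h1 := prox1 (complex.Re (z i 0)) c0 l0 hy1.
have h2 := prox1 (complex.Im (z i 0)) c0 l0 hy2.
set c := 1 - tau * delta in h1 h2 *.
set x1 := sgn _ * _ in h1 *.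
set x2 := sgn (complex.Im _) * _ in h2 *.
have -> : c * x1 - 0 * x2 = c * x1 by ring.
have -> : c * x2 + 0 * x1 = c * x2 by ring.
by apply: addr_ge0; [exact: h1 | exact: h2].
Qed.
Lemma alg (tau delta S c a1 a2 a3 b1 b2 b3 : R) : 0 < tau -> tau * delta < 1 -> c = 1 - tau * delta ->
 0 <= c*b3 - c*b2 - b1 + b3 + tau*a1 - tau*a3 ->
 a2 - 2 * a3 + a1 <= S*(b2 - 2 * b3 + b1) -> 0 <= b2 - 2 * b3 + b1 ->
 2 * tau * ((a2/2 - delta/2 * b2) - (a1/2 - delta/2 * b1)) <= -(1 - tau * S) * (b2 - 2 * b3 + b1).
Proof.
move=> t0 td -> h1 h2 h3.
have h4 := ler_wpM2l (ltW t0) h2.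
have h5 : 0 <= (1 - tau * delta) * (b2 - 2 * b3 + b1) by rewrite mulr_ge0 // subr_ge0 ltW.
have -> : 2 * tau * ((a2/2 - delta/2 * b2) - (a1/2 - delta/2 * b1)) = tau * (a2 - a1) - tau * delta * (b2 - b1) by field.
nra.
Qed.

Section Main.
Variables (m n : nat) (A : 'M[C]_(m, n)) (tau delta l : R).
Local Notation M := (adjmx A *m A).

Lemma rdotAA u w : rdot (A *m u) (A *m w) = rdot u (M *m w).
Proof. by rewrite adjointP mulmxA. Qed.
Lemma Msym u w : rdot u (M *m w) = rdot (M *m u) w.
Proof. by rewrite -rdotAA rdotC rdotAA rdotC. Qed.

Definition fr (v : 'cV[C]_n) := cnorm2 (A *m v) / 2 - delta / 2 * cnorm2 v.

Lemma descent x : 0 < tau -> tau * delta < 1 -> 0 <= l -> inbox l x ->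
  2 * tau * (fr (prox tau delta l (x - tau%:C *: (M *m x))) - fr x) <=
   - (1 - tau * specnorm M) * cnorm2 (prox tau delta l (x - tau%:C *: (M *m x)) - x).
Proof.
move=> t0 td l0 hx; set x' := prox tau delta l (x - tau%:C *: (M *m x)).
have c0 : 0 < 1 - tau * delta by rewrite subr_gt0.
have opt := prox_opt (x - tau%:C *: (M *m x)) c0 l0 hx.
rewrite -/x' in opt.
have ed : cnorm2 (x' - x) = rdot x' x' - 2 * rdot x x' + rdot x x.
  rewrite -rdotvv !rdotBl !rdotBr (rdotC x' x); ring.
rewrite ed /fr -!rdotvv !rdotAA.
apply: (@alg tau delta (specnorm M) (1 - tau * delta) _ _ (rdot x (M *m x'))) => //.
- move: opt; rewrite !rdotBl !rdotBr !rdotZl (rdotC x' x) (rdotC (M *m x) x) -Msym.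
  move=> h; lra.
- have := rdot_le (x' - x) (M *m (x' - x)).
  have := spec_bound M (x' - x).
  move=> hs hr.
  have : rdot (x' - x) (M *m (x' - x)) <= specnorm M * cnorm2 (x' - x).
    apply: le_trans hr _; rewrite -Nn_sqr expr2 mulrCA ler_wpM2l ?Nn_ge0 //.
  rewrite ed mulmxBr !rdotBl !rdotBr (Msym x' x) (rdotC (M *m x') x).
  move=> h; lra.
- by rewrite -ed cnorm2_ge0.
Qed.
End Main.

Lemma ev_small (G D : nat -> R) (k LB : R) : 0 < k ->
  (forall t, 0 <= D t) -> (forall t, k * D t <= G t - G t.+1) ->
  (forall t, LB <= G t) ->
  forall e, 0 < e -> exists N, forall t, (N <= t)%N -> D t < e.
Proof.
move=> k0 D0 hD hLB e e0.
have mono T t : (T <= t)%N -> G t <= G T.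
  elim: t => [|t IH]; first by rewrite leqn0 => /eqP ->.
  rewrite leq_eqVlt => /orP [/eqP -> //|]; rewrite ltnS => /IH h.
  have := hD t; have := D0 t; have := mulr_ge0 (ltW k0) (D0 t); lra.
apply: contrapT => hno.
have hN : forall N, exists t, (N <= t)%N /\ e <= D t.
  move=> N; apply: contrapT => hh; apply: hno; exists N => t hNt.
  rewrite ltNge; apply/negP => he; apply: hh; exists t; by split.
have acc j : exists T, j%:R * (k * e) <= G 0%N - G T.
  elim: j => [|j [T hT]]; first by exists 0%N; rewrite mul0r subrr.
  have [t [hTt he]] := hN T.
  exists t.+1.
  have := mono _ _ hTt; have := hD t.
  have := ler_wpM2l (ltW k0) he.
  rewrite -natr1 mulrDl mul1r; lra.
have b0 : 0 <= `|G 0%N - LB| / (k * e) by rewrite divr_ge0 // mulr_ge0 // ltW.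
have [T hT] := acc (Num.Def.archi_bound (`|G 0%N - LB| / (k * e))).
have := archi_boundP b0.
rewrite ltr_pdivrMr ?mulr_gt0 // => hb.
have := hLB T; have := ler_norm (G 0%N - LB); lra.
Qed.

Lemma small_ge0 (X K : R) : 0 <= K -> (forall e, 0 < e -> - (e * K) <= X) -> 0 <= X.
Proof.
move=> K0 h; rewrite leNgt; apply/negP => hX.
have e0 : 0 < - X / (K + 1) by rewrite divr_gt0 // ?oppr_gt0 //; lra.
have := h _ e0.
have -> : - (- X / (K + 1) * K) = X * K / (K + 1) by field; lra.
rewrite ler_pdivrMr; last by lra.
nra.
Qed.
End H.

Unset Implicit Arguments. Set Strict Implicit.

(* x 0 is x^(1) of the paper; x (t.+1) is x^(t+2). *)
Theorem theorem2 (R : realType) (U B : nat) (P delta tau : R)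
  (H : 'M[R[i]]_(U, B)) (s : 'cV[R[i]]_U)
  (x : nat -> 'cV[R[i]]_B) :
  (0 < U)%N -> (U <= B)%N -> 0 < P -> s != 0 ->
  let Q : 'M[R[i]]_U := 1%:M - ((cnorm2 s)^-1)%:C *: (s *m adjmx s) in
  let A : 'M[R[i]]_(U, B) := Q *m H in
  let l : R := Num.sqrt (P / (2 * B%:R)) in
  0 < delta -> 0 < tau ->
  tau * specnorm (adjmx A *m A) < 1 -> tau * delta < 1 ->
  x 0%N = adjmx H *m s ->
  (forall t : nat,
     x t.+1 = prox tau delta l (x t - tau%:C *: (adjmx A *m A *m x t))) ->
  (forall t : nat, (objF A delta l (x t.+1) <= objF A delta l (x t))%E) /\
  (forall p : 'cV[R[i]]_B, limit_point x p -> stationary A delta l p).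
Proof.
move=> U0 UB P0 s0 Q A l d0 t0 tS td hx0 hrec.
set M := adjmx A *m A in tS hrec *.
set S := specnorm M in tS *.
have l0 : 0 <= l by rewrite /l sqrtr_ge0.
have c0 : 0 < 1 - tau * delta by rewrite subr_gt0.
have S0 : 0 <= S := spec_ge0 M.
have kpos : 0 < 1 - tau * S by rewrite subr_gt0.
have box t : inbox l (x t.+1) by rewrite hrec; apply: prox_box.
have objE v : inbox l v -> objF A delta l v = (fr A delta v)%:E.
  by move=> h; rewrite /objF asboolT.
have desc t : inbox l (x t) -> 2 * tau * (fr A delta (x t.+1) - fr A delta (x t))
    <= -(1 - tau * S) * cnorm2 (x t.+1 - x t).
  by move=> h; rewrite hrec; apply: descent.
split.
  move=> t; case: (pselect (inbox l (x t))) => h; last first.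
    by rewrite /objF (asboolF h) /=; exact: leey.
  rewrite !objE // lee_fin.
  have := desc t h; have := mulr_ge0 (ltW kpos) (cnorm2_ge0 (x t.+1 - x t)).
  move=> h1 h2.
  have h3 : 2 * tau * (fr A delta (x t.+1) - fr A delta (x t)) <= 0 by lra.
  have : 0 < 2 * tau by lra.
  move=> h4; rewrite -subr_le0; rewrite pmulr_rle0 // in h3.
move=> p hp.
set LB := - (delta / 2 * (B%:R * (2 * l ^+ 2))).
have frLB v : inbox l v -> LB <= fr A delta v.
  move=> h; have := ler_wpM2l (x := delta / 2) _ (box_bound h).
  have := cnorm2_ge0 (A *m v); rewrite /fr /LB.
  move=> h1 h2; have : 0 <= delta / 2 by lra.
  move=> h3; have := h2 h3; lra.
have ev := @ev_small R (fun t => 2 * tau * fr A delta (x t.+1))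
   (fun t => cnorm2 (x t.+2 - x t.+1)) (1 - tau * S) (2 * tau * LB) kpos
   (fun t => cnorm2_ge0 _).
have ev' : forall e, 0 < e -> exists N, forall t, (N <= t)%N -> cnorm2 (x t.+2 - x t.+1) < e.
  apply: ev.
    move=> t; have := desc t.+1 (box t); lra.
  by move=> t; rewrite ler_wpM2l ?frLB //; lra.
have close e : 0 < e -> exists t, Nn (x t.+1 - p) <= e /\ Nn (x t.+2 - x t.+1) <= e.
  move=> e0; have e20 : 0 < e ^+ 2 by rewrite exprn_gt0.
  have [N hN] := ev' _ e20.
  have [[|t] [ht hc]] := hp _ e20 N.+1; first by [].
  exists t; split; apply: le_Nn; rewrite ?ltW //.
  by apply: hN.
split.
  move=> i; have [r1 r2] : `|complex.Re (p i 0)| <= l /\ `|complex.Im (p i 0)| <= l.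
    split; apply/ler_addgt0Pr => e e0; have [t [h1 _]] := close e e0;
      have [hb1 hb2] := box t i.
      have -> : complex.Re (p i 0) = complex.Re (x t.+1 i 0) - complex.Re ((x t.+1 - p) i 0).
        by rewrite !mxE ReD ReN; ring.
      apply: le_trans (ler_normB _ _) _; have := Re_le_Nn (x t.+1 - p) i; lra.
    have -> : complex.Im (p i 0) = complex.Im (x t.+1 i 0) - complex.Im ((x t.+1 - p) i 0).
      by rewrite !mxE ImD ImN; ring.
    apply: le_trans (ler_normB _ _) _; have := Im_le_Nn (x t.+1 - p) i; lra.
  by [].
move=> yy hyy.
rewrite -/M.
have SB (v : 'cV[R[i]]_B) : Nn (M *m v) <= S * Nn v := spec_bound M v.
clearbody S M A Q l.
set c := 1 - tau * delta in c0.
set Kb := Num.sqrt (B%:R * (2 * l ^+ 2)).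
have NKb (v : 'cV[R[i]]_B) : inbox l v -> Nn v <= Kb.
  move=> h; rewrite /Nn /Kb ler_sqrt; first exact: box_bound.
  by rewrite mulr_ge0 // mulr_ge0 // sqr_ge0.
have Kb0 : 0 <= Kb by rewrite /Kb sqrtr_ge0.
set Y := Nn yy + Nn p.
have Y0 : 0 <= Y by rewrite /Y addr_ge0 ?Nn_ge0.
set K := (2 * c + 1 + tau * S) * Y + 2 * ((c + 1 + tau * S) * Kb).
have K0 : 0 <= K.
  have : 0 <= tau * S by rewrite mulr_ge0 // ltW.
  move=> h; rewrite /K addr_ge0 // ?mulr_ge0 //; lra.
rewrite rdotNl oppr_le0.
suff : 0 <= tau * rdot (M *m p - delta%:C *: p) (yy - p).
  by rewrite pmulr_rge0.
apply: (small_ge0 K0) => e e0.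
have [t [h1 h2]] := close e e0.
set u := x t.+1 in h1 h2.
set u' := x t.+2 in h2.
have opt : 0 <= rdot (c%:C *: u' - (u - tau%:C *: (M *m u))) (yy - u').
  by rewrite /u' hrec; apply: prox_opt.
set b := c%:C *: u' - (u - tau%:C *: (M *m u)) in opt.
set a := c%:C *: p - (p - tau%:C *: (M *m p)).
have ea : rdot a (yy - p) = tau * rdot (M *m p - delta%:C *: p) (yy - p).
  rewrite /a /c !rdotBl !rdotZl; move: (rdot p _) (rdot (M *m p) _) => r1 r2; ring.
have tS0 : 0 <= tau * S by rewrite mulr_ge0 // ltW.
have eab : a - b = c%:C *: (p - u') - (p - u) + tau%:C *: (M *m (p - u)).
  rewrite /a /b mulmxBr; apply/matrixP => i j; rewrite !mxE; ring.
have hb : Nn b <= (c + 1 + tau * S) * Kb.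
  rewrite /b; apply: le_trans (NnB _ _) _.
  rewrite NnZ (ger0_norm (ltW c0)).
  have e1 := NnB u (tau%:C *: (M *m u)).
  rewrite NnZ (ger0_norm (ltW t0)) in e1.
  have e2 : tau * Nn (M *m u) <= tau * S * Kb.
    rewrite -mulrA ler_pM2l //.
    apply: le_trans (SB u) _.
    by apply: ler_wpM2l; [exact: S0 | exact: NKb (box t)].
  have e3 := ler_wpM2l (ltW c0) (NKb _ (box t.+1)).
  have e4 := NKb _ (box t).
  rewrite /u /u' in e1 e2 e3 e4 *.
  lra.
clearbody a b.
have hup : Nn (u' - p) <= 2 * e.
  have -> : u' - p = (u' - u) + (u - p) by rewrite addrA subrK.
  apply: le_trans (NnD _ _) _; lra.
have esplit : rdot a (yy - p) = rdot b (yy - u') + rdot (a - b) (yy - p) + rdot b (u' - p).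
  have : rdot b (yy - u') + rdot b (u' - p) = rdot b (yy - p).
    by rewrite -rdotDr addrA subrK.
  move=> h; rewrite (rdotBl a b) -h; move: (rdot a _) (rdot b (yy - u')) (rdot b (u' - p)) => r1 r2 r3; ring.
have hab : Nn (a - b) <= (2 * c + 1 + tau * S) * e.
  rewrite eab; apply: le_trans (NnD _ _) _.
  have e1 := NnB (c%:C *: (p - u')) (p - u).
  have e5 : Nn (p - u') = Nn (u' - p) by rewrite -opprB NnN.
  rewrite NnZ (ger0_norm (ltW c0)) e5 in e1.
  have e2 : Nn (tau%:C *: (M *m (p - u))) <= tau * S * e.
    rewrite NnZ (ger0_norm (ltW t0)) -mulrA ler_pM2l //.
    apply: le_trans (SB (p - u)) _.
    by apply: ler_wpM2l; [exact: S0 | rewrite -opprB NnN].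
  have e3 : Nn (p - u) <= e by rewrite -opprB NnN.
  have e4 := ler_wpM2l (ltW c0) hup.
  lra.
have hyp : Nn (yy - p) <= Y by apply: NnB.
have P1 : Nn (a - b) * Nn (yy - p) <= e * ((2 * c + 1 + tau * S) * Y).
  have -> : e * ((2 * c + 1 + tau * S) * Y) = ((2 * c + 1 + tau * S) * e) * Y by ring.
  by apply: ler_pM; rewrite ?Nn_ge0.
have P2 : Nn b * Nn (u' - p) <= e * (2 * ((c + 1 + tau * S) * Kb)).
  have -> : e * (2 * ((c + 1 + tau * S) * Kb)) = ((c + 1 + tau * S) * Kb) * (2 * e) by ring.
  by apply: ler_pM; rewrite ?Nn_ge0.
have := rdot_ge (a - b) (yy - p); have := rdot_ge b (u' - p).
rewrite -ea esplit /K; lra.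
Qed.
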